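(* Let $m\ge 3$ and let $\Omega\subset\mathbb{S}^m$ be an open domain with $\partial\Omega=\mathcal{V}_1\cup\mathcal{V}_2$, where $\mathcal{V}_1,\mathcal{V}_2$ are disjoint compact submanifolds of $\mathbb{S}^m$ (possibly of dimension zero, and $\mathcal V_2$ possibly empty). Let $\rho\in C^{2,\alpha}(\Omega\cup\mathcal{V}_1)$ and $\sigma=e^{-\rho}$, and assume: (1) $\sigma^2$ extends to a $C^{1,1}$ function on $\overline{\Omega}$; (2) $|\nabla\sigma|^2$ extends to a Lipschitz function on $\overline{\Omega}$. Then there is $t_0>0$ such that for all $t>t_0$ the map $\phi_t:=\phi^{\rho+t}:\Omega\cup\mathcal{V}_1\to\mathbb{H}^{m+1}$ associated to $\rho_t=\rho+t$ is an embedded (injective) horospherically concave hypersurface.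
   Context: $\mathbb{S}^m\subset\mathbb{R}^{m+1}$ is the unit sphere with round metric $g_0$; $\nabla$, $\nabla^2$, $|\cdot|$ are with respect to $g_0$. Let $\mathbb{L}^{m+2}$ be $\mathbb{R}^{m+2}$ with $\langle\!\langle x,y\rangle\!\rangle=-x_0y_0+\sum_{i=1}^{m+1}x_iy_i$, and $\mathbb{H}^{m+1}=\{x:\langle\!\langle x,x\rangle\!\rangle=-1,\ x_0>0\}$. For $\rho\in C^1$ the associated map is $$\phi^\rho(x)=\frac{e^{\rho(x)}}{2}\Big(1+e^{-2\rho(x)}\big(1+|\nabla\rho(x)|^2\big)\Big)(1,x)+e^{-\rho(x)}\big(0,-x+\nabla\rho(x)\big).$$ For a conformal metric $g=e^{2\rho}g_0$ ($m\ge3$), the Schouten tensor is $\mathrm{Sch}(g)=\frac{1}{m-2}\big(\mathrm{Ric}(g)-\frac{R(g)}{2(m-1)}g\big)$; its eigenvalues $\lambda_1,\dots,\lambda_m$ are those of $g^{-1}\mathrm{Sch}(g)$. On the sphere, $\mathrm{Sch}(g)=\tfrac12 g_0-\nabla^2\rho+d\rho\otimes d\rho-\tfrac12|\nabla\rho|^2g_0$. The map $\phi^\rho$ ($\rho\in C^2$) is called a horospherically concave hypersurface when all eigenvalues of the Schouten tensor of $e^{2\rho}g_0$ are $<1/2$; then $\phi^\rho$ is an immersion with unit normal $\eta=\phi^\rho-e^{\rho}(1,x)$ whose principal curvatures $\kappa_i>-1$ satisfy $\lambda_i=\tfrac12-\tfrac1{1+\kappa_i}$. *)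

(* Defs.v *)
From mathcomp Require Import all_boot all_order all_algebra.
From mathcomp Require Import all_classical all_reals all_analysis.
Import Order.TTheory GRing.Theory Num.Theory.
Import numFieldNormedType.Exports.
Set Implicit Arguments. Unset Strict Implicit. Unset Printing Implicit Defensive.
Local Open Scope ring_scope.
Local Open Scope classical_set_scope.

Section Defs.
Variable R : realType.

Definition dotv (n : nat) (x y : 'rV[R]_n) : R := \sum_(i < n) x ord0 i * y ord0 i.
Definition enorm (n : nat) (x : 'rV[R]_n) : R := Num.sqrt (dotv x x).

Definition sphere (m : nat) : set 'rV[R]_(m.+1) := [set x | dotv x x = 1].

Definition ebas (n : nat) (i : 'I_n) : 'rV[R]_n := delta_mx ord0 i.

Fixpoint iterD (n p : nat) (vs : seq 'rV[R]_n) (F : 'rV[R]_n -> 'rV[R]_p)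
    : 'rV[R]_n -> 'rV[R]_p :=
  match vs with
  | [::] => F
  | v :: vs' => 'D_v (iterD vs' F)
  end.
Definition smooth_on (n p : nat) (U : set 'rV[R]_n) (F : 'rV[R]_n -> 'rV[R]_p) :=
  forall (vs : seq 'rV[R]_n) x, U x -> differentiable (iterD vs F) x.

Definition submanifold (n k : nat) (V : set 'rV[R]_n) :=
  (k <= n)%N /\
  forall p, V p -> exists (U : set 'rV[R]_n) (F : 'rV[R]_n -> 'rV[R]_(n - k)),
    [/\ open U, U p, smooth_on U F,
        (forall w : 'rV[R]_(n - k), exists v, 'D_v F p = w) &
        V `&` U = [set x | U x /\ F x = 0]].

(** Functions on (subsets of) the sphere are differentiated through their
    degree-0 homogeneous extension y |-> f (y/|y|); at a point x of the sphere
    its ambient gradient is the spherical gradient and its ambient Hessian,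
    restricted to T_x S^m, is the spherical Hessian (w.r.t. g_0). *)
Definition radial (m : nat) (f : 'rV[R]_(m.+1) -> R) : 'rV[R]_(m.+1) -> R :=
  fun y => f ((enorm y)^-1 *: y).
Definition D1 (m : nat) (f : 'rV[R]_(m.+1) -> R) (i : 'I_(m.+1)) :=
  'D_(ebas i) (radial f).
Definition D2 (m : nat) (f : 'rV[R]_(m.+1) -> R) (i j : 'I_(m.+1)) :=
  'D_(ebas i) ('D_(ebas j) (radial f)).

Definition ext (m : nat) (Om : set 'rV[R]_(m.+1)) (g : 'rV[R]_(m.+1) -> R) (p : 'rV[R]_(m.+1)) : R :=
  lim (g @ within Om (nbhs p)).

Definition C2_upto (m : nat) (Om D : set 'rV[R]_(m.+1)) (f : 'rV[R]_(m.+1) -> R) :=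
  [/\ {within D, continuous f},
      (forall x, Om x -> differentiable (radial f) x),
      (forall j x, Om x -> differentiable ('D_(ebas j) (radial f)) x),
      (forall i j x, Om x -> D1 f i @ x --> D1 f i x /\ D2 f i j @ x --> D2 f i j x) &
      (forall i j p, D p -> cvg (D1 f i @ within Om (nbhs p)) /\
                            cvg (D2 f i j @ within Om (nbhs p)))].

Definition C2alpha (m : nat) (Om D : set 'rV[R]_(m.+1)) (alpha : R)
    (f : 'rV[R]_(m.+1) -> R) :=
  C2_upto Om D f /\
  forall K, compact K -> K `<=` D -> exists C : R, forall i j x y,
    K x -> K y -> Om x -> Om y ->
    `|D2 f i j x - D2 f i j y| <= C * powR (enorm (x - y)) alpha.

Definition C11_closure (m : nat) (Om : set 'rV[R]_(m.+1)) (f : 'rV[R]_(m.+1) -> R) :=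
  [/\ (forall x, Om x -> differentiable (radial f) x),
      (forall i x, Om x -> D1 f i @ x --> D1 f i x),
      {within closure Om, continuous f},
      (forall i p, closure Om p -> cvg (D1 f i @ within Om (nbhs p))) &
      exists C : R, forall i x y, Om x -> Om y ->
        `|D1 f i x - D1 f i y| <= C * enorm (x - y)].

Definition sgrad (m : nat) (Om : set 'rV[R]_(m.+1)) (f : 'rV[R]_(m.+1) -> R) (p : 'rV[R]_(m.+1))
  : 'rV[R]_(m.+1) := \row_i ext Om (D1 f i) p.
Definition shess (m : nat) (Om : set 'rV[R]_(m.+1)) (f : 'rV[R]_(m.+1) -> R) (p : 'rV[R]_(m.+1))
  : 'M[R]_(m.+1) := \matrix_(i, j) ext Om (D2 f i j) p.
Definition bilin (m : nat) (H : 'M[R]_(m.+1)) (X Y : 'rV[R]_(m.+1)) : R :=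
  \sum_i \sum_j X ord0 i * H i j * Y ord0 j.

(** Schouten tensor of e^{2 rho} g_0 at p:
    1/2 g_0 - Hess rho + d rho (x) d rho - 1/2 |grad rho|^2 g_0 *)
Definition schouten (m : nat) (Om : set 'rV[R]_(m.+1)) (rho : 'rV[R]_(m.+1) -> R)
    p (X Y : 'rV[R]_(m.+1)) : R :=
  let g := sgrad Om rho p in
  2^-1 * dotv X Y - bilin (shess Om rho p) X Y + dotv g X * dotv g Y
  - 2^-1 * dotv g g * dotv X Y.

Definition tangent (m : nat) (p X : 'rV[R]_(m.+1)) := dotv p X = 0.

Definition schouten_eigenvalue (m : nat) (Om : set 'rV[R]_(m.+1))
    (rho : 'rV[R]_(m.+1) -> R) (p : 'rV[R]_(m.+1)) (lam : R) :=
  exists X, [/\ tangent p X, X != 0 &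
    forall Y, tangent p Y ->
      schouten Om rho p X Y = lam * (expR (2 * rho p) * dotv X Y)].

(** phi^rho : D -> L^{m+2} = R x R^{m+1} *)
Definition phi (m : nat) (Om : set 'rV[R]_(m.+1)) (rho : 'rV[R]_(m.+1) -> R) (p : 'rV[R]_(m.+1))
  : R * 'rV[R]_(m.+1) :=
  let g := sgrad Om rho p in
  let A := expR (rho p) / 2 * (1 + expR (- (2 * rho p)) * (1 + dotv g g)) in
  (A, A *: p + expR (- rho p) *: (g - p)).

Definition horo_concave (m : nat) (Om D : set 'rV[R]_(m.+1)) (rho : 'rV[R]_(m.+1) -> R) :=
  C2_upto Om D rho /\
  forall p, D p -> forall lam, schouten_eigenvalue Om rho p lam -> lam < 2^-1.

Definition injective_on (T U : Type) (D : set T) (f : T -> U) :=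
  forall x y, D x -> D y -> f x = f y -> x = y.

Definition grad_in (m : nat) (f : 'rV[R]_(m.+1) -> R) (x : 'rV[R]_(m.+1)) : 'rV[R]_(m.+1) :=
  \row_i D1 f i x.

End Defs.

(* Main.v *)
Require Import Defs.
From mathcomp Require Import all_boot all_order all_algebra.
From mathcomp Require Import all_classical all_reals all_analysis.
From mathcomp.algebra_tactics Require Import ring lra.
Import Order.TTheory GRing.Theory Num.Theory.
Import numFieldNormedType.Exports.
Local Open Scope ring_scope.
Local Open Scope classical_set_scope.
Set Implicit Arguments. Unset Strict Implicit. Unset Printing Implicit Defensive.

Section L1.
Variable R : realType.
Variable n : nat.
Implicit Types x y z : 'rV[R]_n.

Lemma dotvC x y : dotv x y = dotv y x.
Proof. by apply: eq_bigr => i _; rewrite mulrC. Qed.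
Lemma dotvDl x y z : dotv (x + y) z = dotv x z + dotv y z.
Proof. by rewrite /dotv -big_split; apply: eq_bigr => i _; rewrite !mxE mulrDl. Qed.
Lemma dotvZl a x y : dotv (a *: x) y = a * dotv x y.
Proof. by rewrite /dotv mulr_sumr; apply: eq_bigr => i _; rewrite !mxE mulrA. Qed.
Lemma dotvNl x y : dotv (- x) y = - dotv x y.
Proof. by rewrite -scaleN1r dotvZl mulN1r. Qed.
Lemma dotvBl x y z : dotv (x - y) z = dotv x z - dotv y z.
Proof. by rewrite dotvDl dotvNl. Qed.
Lemma dotvDr x y z : dotv z (x + y) = dotv z x + dotv z y.
Proof. by rewrite dotvC dotvDl !(dotvC z). Qed.
Lemma dotvZr a x y : dotv y (a *: x) = a * dotv y x.
Proof. by rewrite dotvC dotvZl dotvC. Qed.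
Lemma dotvBr x y z : dotv z (x - y) = dotv z x - dotv z y.
Proof. by rewrite dotvC dotvBl !(dotvC z). Qed.
Lemma dotv_ge0 x : 0 <= dotv x x.
Proof. by apply: sumr_ge0 => i _; rewrite -expr2 sqr_ge0. Qed.
Lemma coord_sq x i : x ord0 i ^+ 2 <= dotv x x.
Proof.
rewrite /dotv (bigD1 i) //= -expr2 lerDl; apply: sumr_ge0 => j _.
by rewrite -expr2 sqr_ge0.
Qed.
Lemma dotv_eq0 x : dotv x x = 0 -> x = 0.
Proof.
move=> h; apply/rowP => i; rewrite mxE.
have := coord_sq x i; rewrite h => hi.
have : x ord0 i ^+ 2 = 0 by apply/eqP; rewrite eq_le hi sqr_ge0.
by move/eqP; rewrite sqrf_eq0 => /eqP.
Qed.
Lemma enorm_sq x : enorm x ^+ 2 = dotv x x.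
Proof. by rewrite /enorm sqr_sqrtr // dotv_ge0. Qed.
Lemma enorm_ge0 x : 0 <= enorm x.
Proof. exact: sqrtr_ge0. Qed.
Lemma coord_le x i : `|x ord0 i| <= enorm x.
Proof.
rewrite -ler_sqr ?nnegrE ?enorm_ge0 // enorm_sq real_normK ?num_real //.
exact: coord_sq.
Qed.
Lemma enormZ a x : enorm (a *: x) = `|a| * enorm x.
Proof.
by rewrite /enorm dotvZl dotvZr mulrA -expr2 sqrtrM ?sqr_ge0 // sqrtr_sqr.
Qed.
Lemma CS x y : dotv x y ^+ 2 <= dotv x x * dotv y y.
Proof.
have [y0|ypos] := eqVneq (dotv y y) 0.
  have -> : y = 0 by apply: dotv_eq0.
  by rewrite -(scale0r x) !dotvZr !dotvZl !mul0r expr0n /= mulr0.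
have hy : 0 < dotv y y by rewrite lt_def ypos dotv_ge0.
set t := dotv x y / dotv y y.
have := dotv_ge0 (x - t *: y).
rewrite dotvBl !dotvBr !dotvZl !dotvZr (dotvC y x) => h.
have e : t * dotv y y = dotv x y by rewrite /t divfK // ?gt_eqF.
rewrite -subr_ge0.
have -> : dotv x x * dotv y y - dotv x y ^+ 2
  = dotv y y * (dotv x x - t * dotv x y - (t * dotv x y - t * (t * dotv y y))).
  rewrite e; rewrite -e; ring.
by rewrite mulr_ge0 // ltW.
Qed.
Lemma dotv_le_enorm x y : `|dotv x y| <= enorm x * enorm y.
Proof.
rewrite -ler_sqr ?nnegrE ?mulr_ge0 ?enorm_ge0 // exprMn !enorm_sq real_normK ?num_real //.
exact: CS.
Qed.
Lemma enormD x y : enorm (x + y) <= enorm x + enorm y.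
Proof.
rewrite -ler_sqr ?nnegrE ?addr_ge0 ?enorm_ge0 // enorm_sq dotvDl !dotvDr.
rewrite (dotvC y x) -(enorm_sq x) -(enorm_sq y).
have h := dotv_le_enorm x y; have h2 := ler_norm (dotv x y).
nra.
Qed.
Lemma sphere_dist x y : dotv x x = 1 -> dotv y y = 1 -> enorm (x - y) <= 2.
Proof.
move=> hx hy; rewrite -ler_sqr ?nnegrE ?enorm_ge0 // enorm_sq dotvBl !dotvBr hx hy (dotvC y x).
have := dotv_ge0 (x + y); rewrite dotvDl !dotvDr hx hy (dotvC y x) => h.
lra.
Qed.
End L1.

Section L2.
Variable R : realType.
Variable n : nat.
Local Notation V := 'rV[R]_n.

Lemma cvg_sumI (T : Type) (F : set_system T) (FF : Filter F)
  (f : 'I_n -> T -> R) (a : 'I_n -> R) :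
  (forall i, f i @ F --> a i) -> (fun z => \sum_i f i z) @ F --> \sum_i a i.
Proof. by move=> h; apply: cvg_big => //; exact: add_continuous. Qed.

Lemma cvg_coord (T : Type) (F : set_system T) (FF : Filter F) (f : T -> V) (a : V) i :
  f @ F --> a -> (fun z => f z ord0 i) @ F --> a ord0 i.
Proof. by move=> h; apply: (@continuous_cvg _ _ _ F FF f (fun M : V => M ord0 i) a) => //; exact: coord_continuous. Qed.

Lemma cvg_dotv (T : Type) (F : set_system T) (FF : Filter F) (f g : T -> V) (a b : V) :
  f @ F --> a -> g @ F --> b -> (fun z => dotv (f z) (g z)) @ F --> dotv a b.
Proof.
move=> hf hg; apply: cvg_sumI => i.
by apply: (@cvgM _ _ _ _ (fun z => f z ord0 i) (fun z => g z ord0 i));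
  apply: cvg_coord.
Qed.

Lemma cvg_enorm (T : Type) (F : set_system T) (FF : Filter F) (f : T -> V) (a : V) :
  f @ F --> a -> (fun z => enorm (f z)) @ F --> enorm a.
Proof.
move=> hf; apply: (@continuous_cvg _ _ _ F FF (fun z => dotv (f z) (f z)) (@Num.sqrt R)).
  exact: sqrt_continuous.
exact: cvg_dotv.
Qed.

Lemma cont_enorm_sub (w : V) : continuous (fun z : V => enorm (z - w)).
Proof.
move=> z; apply: (@cvg_enorm _ (nbhs z) _ (fun y => y - w)).
by apply: (@cvgB _ _ _ _ _ id (cst w)); [exact: cvg_id | exact: cvg_cst].
Qed.

Lemma derive_lincomb (f : V -> R) x X : differentiable f x ->
  'D_X f x = \sum_j X ord0 j * 'D_(@ebas R _ j) f x.
Proof.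
move=> df; rewrite deriveE // {1}(@row_sum_delta _ _ X) linear_sum.
by apply: eq_bigr => j _; rewrite linearZ /= deriveE.
Qed.

Lemma derive_expM (f : V -> R) (k : R) x v : differentiable f x ->
  differentiable (fun z => expR (k * f z)) x /\
  'D_v (fun z => expR (k * f z)) x = k * expR (k * f x) * 'D_v f x.
Proof.
move=> df.
have dkf : differentiable (k *: f) x by apply: differentiableZ.
have de : differentiable (@expR R) ((k *: f) x).
  by apply/derivable1_diffP; exact: derivable_expR.
have -> : (fun z => expR (k * f z)) = expR \o (k *: f) by apply: funext.
split; first exact: differentiable_comp.
rewrite deriveE; last exact: differentiable_comp.
rewrite diff_comp //= deriv1E; last first.
  by apply/derivable1_diffP.
rewrite /= diffZ //= deriveE //.
rewrite derive1E (_ : 'D_1 expR ((k *: f) x) = expR ((k *: f) x)); last first.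
  exact: derive_val.
change ((k * 'd f x v) * expR (k * f x) = k * expR (k * f x) * 'd f x v).
by rewrite mulrAC -mulrA mulrC -mulrA.
Qed.
End L2.

Section L3.
Variable R : realType.
Variable n : nat.
Local Notation V := 'rV[R]_n.

Lemma enorm_pos_scale k (c : R) (z : 'rV[R]_k) : 0 < c -> enorm (c *: z) = c * enorm z.
Proof. by move=> c0; rewrite enormZ gtr0_norm. Qed.

Lemma radialZ m (f : 'rV[R]_(m.+1) -> R) (c : R) z : 0 < c ->
  radial f (c *: z) = radial f z.
Proof.
move=> c0; rewrite /radial enorm_pos_scale // scalerA; congr f; congr (_ *: _).
have [e0|en0] := eqVneq (enorm z) 0; first by rewrite e0 mulr0 invr0 mul0r.
by rewrite invfM mulrAC mulVf ?gt_eqF // mul1r.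
Qed.

Lemma radial_sph m (f : 'rV[R]_(m.+1) -> R) z : dotv z z = 1 -> radial f z = f z.
Proof. by move=> h; rewrite /radial /enorm h sqrtr1 invr1 scale1r. Qed.

Lemma deriveZhom (f : V -> R) (c : R) z v : 0 < c ->
  (forall w, f (c^-1 *: w) = f w) -> differentiable f z ->
  differentiable f (c *: z) /\ 'D_v f (c *: z) = c^-1 * 'D_v f z.
Proof.
move=> c0 hom df.
pose L : V -> V := c^-1 *: (@id V).
have hL : forall y, L y = c^-1 *: y by [].
have e : f = f \o L by apply: funext => w /=; rewrite hL hom.
have dL : forall y, differentiable L y.
  by move=> y; apply: differentiableZ; exact: ex_diff.
have Lcz : L (c *: z) = z by rewrite hL scalerA mulVf ?gt_eqF ?scale1r.
have dfc : differentiable (f \o L) (c *: z).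
  by apply: differentiable_comp => //; rewrite Lcz.
rewrite e; split => //.
rewrite deriveE // diff_comp //; last by rewrite Lcz.
rewrite /= diffZ; last exact: ex_diff.
rewrite Lcz /= diff_val /= linearZ /= -deriveE //.
by rewrite -e.
Qed.

Lemma derive_bound (f : V -> R) x v (K : R) : differentiable f x ->
  (\forall z \near x, `|f z - f x| <= K * enorm (z - x)) ->
  `|'D_v f x| <= K * enorm v.
Proof.
move=> df hK.
have dv : derivable f x v by apply: diff_derivable.
have hc : (fun h : R => h *: v + x) @ (0 : R) --> x.
  rewrite -[X in _ --> X](add0r x) -[X in _ --> X + _](scale0r v).
  apply: cvgD; last exact: cvg_cst.
  by apply: (@cvgZ _ _ _ _ _ id (cst v)); [exact: cvg_id | exact: cvg_cst].
have h0 : \forall h \near (0 : R), `|f (h *: v + x) - f x| <= K * enorm (h *: v + x - x).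
  exact: hc hK.
have h1 : \forall h \near (0 : R)^', `|h^-1 *: ((f \o shift x) (h *: v) - f x)| <= K * enorm v.
  have h0' := nbhs_dnbhs h0.
  apply: filterS2 h0' (nbhs_dnbhs_neq (0:R)) => h.
  rewrite addrK enormZ /= => hh hn0.
  rewrite normrM normfV ler_pdivrMl ?normr_gt0 // mulrCA.
  exact: hh.
have lb := limr_le dv (filterS (fun h (hh : _ <= _) => le_trans (ler_norm _) hh) h1).
have ub : - (K * enorm v) <= 'D_v f x.
  apply: limr_ge => //; apply: filterS h1 => h hh.
  by rewrite lerNl; apply: le_trans hh; rewrite -normrN ler_norm.
by rewrite ler_norml ub /=; exact: lb.
Qed.
End L3.

Section L4.
Variable R : realType.
Variable m : nat.
Local Notation V := 'rV[R]_(m.+1).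

Lemma enorm_sph (x : V) : dotv x x = 1 -> enorm x = 1.
Proof. by move=> h; rewrite /enorm h sqrtr1. Qed.

Lemma enormBC (x z : V) : enorm (x - z) = enorm (z - x).
Proof. by rewrite -opprB -scaleN1r enormZ normrN normr1 mul1r. Qed.

Lemma enorm_rev (x z : V) : `|enorm x - enorm z| <= enorm (x - z).
Proof.
rewrite ler_norml; apply/andP; split.
  have := enormD (z - x) x; rewrite subrK => h.
  have e : enorm (z - x) = enorm (x - z).
    by rewrite -opprB -scaleN1r enormZ normrN normr1 mul1r.
  lra.
have := enormD (x - z) z; rewrite subrK => h; lra.
Qed.

Lemma cone (U Om : set V) x : open U -> Om = U `&` @sphere R m -> Om x ->
  \forall z \near x, 2^-1 < enorm z /\ Om ((enorm z)^-1 *: z).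
Proof.
move=> oU eOm Omx.
have Sx : dotv x x = 1 by move: Omx; rewrite eOm => -[].
have Ux : U x by move: Omx; rewrite eOm => -[].
have ex := enorm_sph Sx.
have hcn : (fun z : V => enorm z) @ x --> (1:R).
  by rewrite -ex; apply: (@cvg_enorm R m.+1 _ (nbhs x) _ id x); exact: cvg_id.
have hnr : (fun z : V => (enorm z)^-1 *: z) @ x --> x.
  have h1 : (fun z : V => (enorm z)^-1) @ x --> (1:R)^-1.
    by apply: cvgV hcn; exact: oner_neq0.
  have := cvgZ h1 (@cvg_id _ (nbhs x)).
  rewrite invr1 scale1r; exact.
have hU : nbhs x U by apply: open_nbhs_nbhs; split.
have hpos : \forall z \near x, 2^-1 < enorm z.
  have h2 : (2:R)^-1 < 1 by lra.
  exact: (@cvgr_gt R _ _ _ _ _ hcn _ h2).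
apply: filterS2 hpos (hnr _ hU) => z hz Uz; split => //.
rewrite eOm; split => //.
rewrite /sphere /= dotvZl dotvZr -(enorm_sq z) mulrA -expr2 -exprMn mulVf ?expr1n //.
by rewrite gt_eqF //; lra.
Qed.

Lemma nrm_dist (x z : V) : dotv x x = 1 -> 0 < enorm z ->
  enorm ((enorm z)^-1 *: z - x) <= 2 * (enorm z)^-1 * enorm (z - x).
Proof.
move=> Sx cz.
set c := enorm z.
have ex := enorm_sph Sx.
have e : (c^-1 *: z - x) = c^-1 *: (z - x) + (c^-1 - 1) *: x.
  by rewrite scalerBr scalerBl scale1r addrA subrK.
rewrite e; apply: le_trans (enormD _ _) _.
rewrite !enormZ ex mulr1 gtr0_norm ?invr_gt0 //.
have : `|c^-1 - 1| <= c^-1 * enorm (z - x).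
  have -> : c^-1 - 1 = c^-1 * (1 - c) by rewrite mulrBr mulr1 mulVf ?gt_eqF.
  rewrite normrM gtr0_norm ?invr_gt0 // ler_pM2l ?invr_gt0 //.
  by have := enorm_rev x z; rewrite ex enormBC.
lra.
Qed.
End L4.

Section L5.
Variable R : realType.
Variable m : nat.
Local Notation V := 'rV[R]_(m.+1).
Variables (U Om : set V) (rho s : V -> R).
Hypothesis oU : open U.
Hypothesis eOm : Om = U `&` @sphere R m.
Hypothesis dr : forall x, Om x -> differentiable (radial rho) x.
Hypothesis ds : forall x, Om x -> s x = expR (- rho x) ^+ 2.

Let r := radial rho.
Let E := fun z => expR (-2 * r z).

Lemma expN2 (a : R) : expR (- a) ^+ 2 = expR (-2 * a).
Proof. by rewrite -expRM_natl; congr expR; rewrite mulrN mulNr. Qed.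

Lemma OmS x : Om x -> dotv x x = 1.
Proof. by rewrite eOm => -[]. Qed.

Lemma r_hom c w : 0 < c -> r (c^-1 *: w) = r w.
Proof. by move=> c0; rewrite /r radialZ // invr_gt0. Qed.

Lemma r_sph x : Om x -> r x = rho x.
Proof. by move=> /OmS h; rewrite /r radial_sph. Qed.

Lemma dr_scale y c v : Om y -> 0 < c ->
  differentiable r (c *: y) /\ 'D_v r (c *: y) = c^-1 * 'D_v r y.
Proof. by move=> Oy c0; apply: deriveZhom => //; [move=> w; exact: r_hom | exact: dr]. Qed.

Lemma rad_s_near x : Om x -> \forall z \near x, radial s z = E z.
Proof.
move=> Ox; apply: filterS (cone oU eOm Ox) => z [zpos Oz].
by rewrite /radial ds // expN2.
Qed.

Lemma D1s_eq x v : Om x -> 'D_v (radial s) x = -2 * E x * 'D_v r x.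
Proof.
move=> Ox; rewrite (near_eq_derive _ (rad_s_near Ox)).
by have [_ ->] := derive_expM (-2) v (dr Ox).
Qed.

Lemma rad_sig : radial (fun y => expR (- rho y)) = fun z => expR (-1 * r z).
Proof. by apply: funext => z; rewrite mulN1r. Qed.

Lemma D1sig_eq x v : Om x ->
  'D_v (radial (fun y => expR (- rho y))) x = -1 * expR (-1 * r x) * 'D_v r x.
Proof. by move=> Ox; rewrite rad_sig; have [_ ->] := derive_expM (-1) v (dr Ox). Qed.
End L5.

Section L6.
Variable R : realType.
Variable m : nat.
Local Notation V := 'rV[R]_(m.+1).
Variables (U Om : set V) (rho s : V -> R).
Hypothesis oU : open U.
Hypothesis eOm : Om = U `&` @sphere R m.
Hypothesis dr : forall x, Om x -> differentiable (radial rho) x.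
Hypothesis ddr : forall j x, Om x -> differentiable ('D_(@ebas R _ j) (radial rho)) x.
Hypothesis ds : forall x, Om x -> s x = expR (- rho x) ^+ 2.
Variables (Cs B1 : R).
Hypothesis Cs0 : 0 <= Cs.
Hypothesis B10 : 0 <= B1.
Hypothesis hL : forall i x y, Om x -> Om y ->
  `|D1 s i x - D1 s i y| <= Cs * enorm (x - y).
Hypothesis hB : forall i x, Om x -> `|D1 s i x| <= B1.

Let r := radial rho.
Let E := fun z => expR (-2 * r z).

Lemma hess_bound x X : Om x ->
  - E x * bilin (\matrix_(i, j) D2 rho i j x) X X <= (4 * Cs + B1) * (m.+1)%:R * dotv X X.
Proof.
move=> Ox.
pose hj := fun j : 'I_m.+1 => X ord0 j *: 'D_(@ebas R _ j) r.
pose Q := \sum_(j < m.+1) hj j.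
have QE : forall z, Q z = \sum_j X ord0 j * 'D_(@ebas R _ j) r z.
  by move=> z; rewrite /Q fct_sumE.
have dQ : differentiable Q x.
  by apply: differentiable_sum => j; apply: differentiableZ; exact: ddr.
have dE : differentiable E x by have [] := derive_expM (-2) 0 (dr Ox).
pose T := ((-2) *: E) * Q.
have DT : 'D_X T x = -2 * E x * 'D_X Q x + 4 * E x * Q x ^+ 2.
  rewrite deriveM; last 2 first.
  - by apply: diff_derivable; apply: differentiableZ.
  - exact: diff_derivable.
  rewrite deriveZ; last exact: diff_derivable.
  have [_ ->] := derive_expM (-2) X (dr Ox).
  rewrite (derive_lincomb _ (dr Ox)) -QE.
  rewrite /E /=.
  change (-2 * expR (-2 * r x) * 'D_X Q x + Q x * (-2 * (-2 * expR (-2 * r x) * Q x)) =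
    -2 * expR (-2 * r x) * 'D_X Q x + 4 * expR (-2 * r x) * Q x ^+ 2).
  ring.
have DQ : 'D_X Q x = bilin (\matrix_(i, j) D2 rho i j x) X X.
  rewrite (derive_lincomb _ dQ) /bilin; apply: eq_bigr => i _.
  rewrite derive_sum; last first.
    by move=> j; apply: diff_derivable; apply: differentiableZ; exact: ddr.
  rewrite mulr_sumr; apply: eq_bigr => j _.
  rewrite /hj deriveZ; last exact: diff_derivable (ddr j Ox).
  rewrite mxE /D2.
  change (X ord0 i * (X ord0 j * 'D_(@ebas R _ i) ('D_(@ebas R _ j) r) x) =
    X ord0 i * 'D_(@ebas R _ i) ('D_(@ebas R _ j) r) x * X ord0 j).
  ring.
have Tsph : forall y, Om y -> T y = \sum_j X ord0 j * D1 s j y.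
  move=> y Oy; change (-2 * E y * Q y = \sum_j X ord0 j * D1 s j y).
  rewrite QE mulr_sumr; apply: eq_bigr => j _.
  rewrite /D1 (D1s_eq oU eOm dr ds) //.
  change (-2 * E y * (X ord0 j * 'D_(@ebas R _ j) r y) =
    X ord0 j * (-2 * E y * 'D_(@ebas R _ j) r y)).
  ring.
have Tscale : forall y c, Om y -> 0 < c -> T (c *: y) = c^-1 * T y.
  move=> y c Oy c0.
  change (-2 * E (c *: y) * Q (c *: y) = c^-1 * (-2 * E y * Q y)).
  have -> : E (c *: y) = E y by rewrite /E /r radialZ.
  rewrite !QE.
  have -> : \sum_j X ord0 j * 'D_(@ebas R _ j) r (c *: y) =
            c^-1 * \sum_j (X ord0 j * 'D_(@ebas R _ j) r y).
    rewrite mulr_sumr; apply: eq_bigr => j _.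
    have [_ ->] := dr_scale dr (@ebas R _ j) Oy c0.
    by rewrite mulrCA.
  ring.
pose S := fun w => \sum_j X ord0 j * D1 s j w.
have nX0 : 0 <= (m.+1)%:R * enorm X by rewrite mulr_ge0 ?enorm_ge0.
have hSd : forall y, Om y -> `|S y - S x| <= (m.+1)%:R * enorm X * Cs * enorm (y - x).
  move=> y Oy; rewrite /S -sumrB.
  apply: le_trans (ler_norm_sum _ _ _) _.
  have -> : (m.+1)%:R * enorm X * Cs * enorm (y - x) =
     \sum_(j < m.+1) (enorm X * (Cs * enorm (y - x))).
    rewrite sumr_const card_ord -mulr_natl; ring.
  apply: ler_sum => j _; rewrite -mulrBr normrM.
  by apply: ler_pM => //; [exact: coord_le | exact: hL].
have hSx : `|S x| <= (m.+1)%:R * enorm X * B1.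
  rewrite /S; apply: le_trans (ler_norm_sum _ _ _) _.
  have -> : (m.+1)%:R * enorm X * B1 = \sum_(j < m.+1) (enorm X * B1).
    rewrite sumr_const card_ord -mulr_natl; ring.
  apply: ler_sum => j _; rewrite normrM.
  by apply: ler_pM => //; [exact: coord_le | exact: hB].
set K := (m.+1)%:R * enorm X.
have K0 : 0 <= K := nX0.
have Tnear : \forall z \near x,
    `|T z - T x| <= ((8 * Cs + 2 * B1) * K) * enorm (z - x).
  apply: filterS (cone oU eOm Ox) => z [cz Oy].
  have c0 : 0 < enorm z by apply: lt_trans cz; rewrite invr_gt0.
  have zE : z = enorm z *: ((enorm z)^-1 *: z).
    by rewrite scalerA mulfV ?gt_eqF // scale1r.
  have hyx := nrm_dist (OmS eOm Ox) c0.
  move: Oy c0 cz hyx zE; set c := enorm z; set y := c^-1 *: z => Oy c0 cz hyx zE.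
  rewrite {1}zE Tscale // !Tsph //.
  have hc1 : `|c^-1 - 1| <= c^-1 * enorm (z - x).
    have -> : c^-1 - 1 = c^-1 * (enorm x - c).
      by rewrite (enorm_sph (OmS eOm Ox)) mulrBr mulr1 mulVf ?gt_eqF.
    rewrite normrM gtr0_norm ?invr_gt0 // ler_pM2l ?invr_gt0 //.
    by have := enorm_rev x z; rewrite enormBC.
  have ci : c * c^-1 = 1 by rewrite mulfV ?gt_eqF.
  have i0 : 0 < c^-1 by rewrite invr_gt0.
  have i2 : c^-1 < 2 by nra.
  have tri : `|c^-1 * S y - S x| <= c^-1 * `|S y - S x| + `|c^-1 - 1| * `|S x|.
    have -> : c^-1 * S y - S x = c^-1 * (S y - S x) + (c^-1 - 1) * S x by ring.
    apply: le_trans (ler_normD _ _) _.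
    by rewrite !normrM gtr0_norm.
  have h1 := hSd y Oy.
  have e0 : 0 <= enorm (z - x) := enorm_ge0 _.
  have d0 : 0 <= enorm (y - x) := enorm_ge0 _.
  have a1 : c^-1 * `|S y - S x| <= c^-1 * (K * Cs * (2 * c^-1 * enorm (z - x))).
    rewrite ler_pM2l //; apply: le_trans h1 _.
    by apply: ler_wpM2l => //; rewrite mulr_ge0 //.
  have a2 : c^-1 * (K * Cs * (2 * c^-1 * enorm (z - x))) <= 8 * K * Cs * enorm (z - x).
    have k0 : 0 <= K * Cs * enorm (z - x) by do 2 apply: mulr_ge0 => //.
    have : c^-1 * c^-1 <= 4 by nra.
    nra.
  have a3 : `|c^-1 - 1| * `|S x| <= (c^-1 * enorm (z - x)) * (K * B1).
    by apply: ler_pM => //; exact: hSx.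
  have a4 : (c^-1 * enorm (z - x)) * (K * B1) <= 2 * K * B1 * enorm (z - x).
    have k0 : 0 <= K * B1 * enorm (z - x) by do 2 apply: mulr_ge0 => //.
    nra.
  apply: le_trans tri _.
  have : (8 * Cs + 2 * B1) * K * enorm (z - x) = 8 * K * Cs * enorm (z - x) + 2 * K * B1 * enorm (z - x) by ring.
  lra.
have dT : differentiable T x.
  by apply: differentiableM => //; apply: differentiableZ.
have hb := derive_bound X dT Tnear.
rewrite DQ in DT.
have Ep : 0 < E x by rewrite /E expR_gt0.
have EQ : 0 <= E x * Q x ^+ 2 by rewrite mulr_ge0 ?sqr_ge0 // ltW.
have eX := enorm_sq X.
have hD := ler_norm ('D_X T x).
rewrite -eX /K.
set H := bilin _ X X in DT *.
rewrite mulNr.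
have : E x * H = (4 * (E x * Q x ^+ 2) - 'D_X T x) / 2 by rewrite DT; field.
move=> ->.
have : (8 * Cs + 2 * B1) * ((m.+1)%:R * enorm X) * enorm X =
   2 * ((4 * Cs + B1) * (m.+1)%:R * enorm X ^+ 2) by ring.
rewrite /K in hb; lra.
Qed.
End L6.

Section L8.
Variable R : realType.

Lemma inj_scalar (sx sy tau A d e Gx Gy Fx Fy nC1 nB1 CF M1 : R) :
  0 < sx -> 0 < sy -> 0 < tau -> 0 <= e -> d = e ^+ 2 ->
  A * d = tau * (sy * Gy - sx * Gx) + tau * (sx + sy) * d / 2 ->
  2 * sx * tau * A = 1 + tau ^+ 2 * (sx ^+ 2 + Fx) ->
  2 * sy * tau * A = 1 + tau ^+ 2 * (sy ^+ 2 + Fy) ->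
  0 <= Fx -> 0 <= Fy -> `|Fx - Fy| <= CF * e ->
  `|sy ^+ 2 * Gy - sx ^+ 2 * Gx| <= nC1 * d -> `|sy ^+ 2 * Gy| <= nB1 * e ->
  sx ^+ 2 <= M1 -> sy ^+ 2 <= M1 -> tau ^+ 2 * M1 <= 2^-1 -> tau ^+ 2 <= 1 ->
  0 <= nC1 -> 0 <= nB1 -> 0 <= CF -> 0 <= M1 ->
  tau ^+ 2 * (2 * nC1 + 4 * CF * nB1 + 2 * M1) < 1 -> d = 0.
Proof.
move=> sx0 sy0 t0 e0 de E1 E2x E2y Fx0 Fy0 hF hG hGy hMx hMy htM ht1 c0 b0 f0 m0 hsmall.
set t2 := tau ^+ 2 in htM ht1 hsmall E2x E2y *.
have t20 : 0 < t2 by rewrite exprn_gt0.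
have d0 : 0 <= d by rewrite de sqr_ge0.
set dl := sx - sy.
have h1 : dl * (1 - t2 * (sx * sy) + t2 * Fy) = t2 * sy * (Fx - Fy).
  have : sy * (2 * sx * tau * A) = sx * (2 * sy * tau * A) by ring.
  rewrite E2x E2y /dl /t2 => h; nra.
have sxy : sx * sy <= M1 by nra.
have h2 : 2^-1 <= 1 - t2 * (sx * sy) + t2 * Fy.
  have : t2 * (sx * sy) <= t2 * M1 by rewrite ler_pM2l.
  have : 0 <= t2 * Fy by rewrite mulr_ge0 // ltW.
  lra.
have h3 : `|dl| <= 2 * t2 * sy * (CF * e).
  have : `|dl| * (1 - t2 * (sx * sy) + t2 * Fy) = t2 * sy * `|Fx - Fy|.
    have qp : 0 < 1 - t2 * (sx * sy) + t2 * Fy by apply: lt_le_trans h2; rewrite invr_gt0.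
    rewrite -[X in _ * X = _](gtr0_norm qp) -normrM h1 normrM (gtr0_norm (mulr_gt0 t20 sy0)) //.
  have : t2 * sy * `|Fx - Fy| <= t2 * sy * (CF * e) by rewrite ler_pM2l ?mulr_gt0.
  have := normr_ge0 dl.
  nra.
have h4 : (2 * sx * tau * A) * sy * d =
   2 * t2 * sy * (sy ^+ 2 * Gy - sx ^+ 2 * Gx) + 2 * t2 * dl * (sy ^+ 2 * Gy)
   + t2 * sx * sy * (sx + sy) * d.
  have h4' : (2 * sx * tau * A) * sy * d = 2 * sx * sy * tau * (A * d) by ring.
  rewrite E1 in h4'; rewrite h4' /t2 /dl; field; lra.
rewrite E2x in h4.
have b1 : 2 * t2 * sy * (sy ^+ 2 * Gy - sx ^+ 2 * Gx) <= 2 * t2 * sy * (nC1 * d).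
  rewrite ler_pM2l ?mulr_gt0 //; apply: le_trans (ler_norm _) hG.
have b2 : 2 * t2 * dl * (sy ^+ 2 * Gy) <= 2 * t2 * (2 * t2 * sy * (CF * e)) * (nB1 * e).
  have : dl * (sy ^+ 2 * Gy) <= `|dl| * `|sy ^+ 2 * Gy| by rewrite -normrM ler_norm.
  have : `|dl| * `|sy ^+ 2 * Gy| <= (2 * t2 * sy * (CF * e)) * (nB1 * e).
    by apply: ler_pM => //.
  move=> h h'; have := le_trans h' h; have : 0 < 2 * t2 by rewrite mulr_gt0.
  nra.
have b3 : t2 * sx * sy * (sx + sy) * d <= t2 * sy * (2 * M1) * d.
  have : sx * (sx + sy) <= 2 * M1 by nra.
  move=> h; have : 0 <= t2 * sy * d by rewrite !mulr_ge0 // ltW.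
  nra.
have b2' : 2 * t2 * (2 * t2 * sy * (CF * e)) * (nB1 * e) <= t2 * sy * (4 * CF * nB1) * d.
  rewrite de; have : 0 <= t2 * sy * CF * nB1 * e ^+ 2 by rewrite !mulr_ge0 // ?ltW // sqr_ge0.
  have : t2 * t2 <= t2 by nra.
  nra.
have key : sy * d * (1 + t2 * (sx ^+ 2 + Fx)) <= sy * d * (t2 * (2 * nC1 + 4 * CF * nB1 + 2 * M1)).
  have : sy * d * (1 + t2 * (sx ^+ 2 + Fx)) = (1 + t2 * (sx ^+ 2 + Fx)) * sy * d by ring.
  move=> ->; rewrite h4.
  have : sy * d * (t2 * (2 * nC1 + 4 * CF * nB1 + 2 * M1)) =
    2 * t2 * sy * (nC1 * d) + t2 * sy * (4 * CF * nB1) * d + t2 * sy * (2 * M1) * d by ring.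
  move=> ->; lra.
have : 0 <= t2 * (sx ^+ 2 + Fx) by rewrite mulr_ge0 ?addr_ge0 ?sqr_ge0 // ltW.
have : 0 <= sy * d by rewrite mulr_ge0 // ltW.
move=> h5 h6.
have : sy * d <= sy * d * (t2 * (2 * nC1 + 4 * CF * nB1 + 2 * M1)) by nra.
move=> h7.
have : sy * d * (1 - t2 * (2 * nC1 + 4 * CF * nB1 + 2 * M1)) <= 0 by nra.
have : 0 < 1 - t2 * (2 * nC1 + 4 * CF * nB1 + 2 * M1) by lra.
move=> hp hn.
have : sy * d <= 0 by nra.
move=> h8; apply/eqP; rewrite eq_le d0 andbT.
by rewrite -(pmulr_rle0 _ sy0).
Qed.
End L8.

Section L9.
Variable R : realType.
Variable n : nat.
Local Notation V := 'rV[R]_n.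

Lemma sum_coord_bound (a w : V) (Ca : R) :
  (forall i, `|a ord0 i| <= Ca) -> `|dotv a w| <= n%:R * Ca * enorm w.
Proof.
move=> ha; rewrite /dotv; apply: le_trans (ler_norm_sum _ _ _) _.
have -> : n%:R * Ca * enorm w = \sum_(i < n) (Ca * enorm w).
  by rewrite sumr_const card_ord -mulr_natl; ring.
apply: ler_sum => i _; rewrite normrM; apply: ler_pM => //; last exact: coord_le.
Qed.

Lemma inj_vec (x y gx gy : V) (sx sy tau Ax Ay C1 CF M1 M2 : R) :
  dotv x x = 1 -> dotv y y = 1 -> 0 < sx -> 0 < sy -> 0 < tau ->
  Ax = Ay ->
  Ax *: x + (sx * tau) *: (gx - x) = Ay *: y + (sy * tau) *: (gy - y) ->
  2 * sx * tau * Ax = 1 + tau ^+ 2 * (sx ^+ 2 + sx ^+ 2 * dotv gx gx) ->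
  2 * sy * tau * Ay = 1 + tau ^+ 2 * (sy ^+ 2 + sy ^+ 2 * dotv gy gy) ->
  (forall i, `|sx ^+ 2 * gx ord0 i - sy ^+ 2 * gy ord0 i| <= C1 * enorm (x - y)) ->
  `|sx ^+ 2 * dotv gx gx - sy ^+ 2 * dotv gy gy| <= CF * enorm (x - y) ->
  sx ^+ 2 <= M1 -> sy ^+ 2 <= M1 -> sy ^+ 2 * dotv gy gy <= M2 ->
  0 <= C1 -> 0 <= CF -> 0 <= M1 -> 0 <= M2 ->
  tau ^+ 2 * M1 <= 2^-1 -> tau ^+ 2 <= 1 ->
  tau ^+ 2 * (2 * (n%:R * C1) + 4 * CF * (n%:R * (M1 + M2)) + 2 * M1) < 1 ->
  x = y.
Proof.
move=> Sx Sy sx0 sy0 t0 eA hv E2x E2y hL1 hL2 hMx hMy hM2 c0 f0 m10 m20 htM ht1 hsm.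
set w := x - y.
have dw : dotv w w = 2 - 2 * dotv x y.
  by rewrite /w dotvBl !dotvBr Sx Sy (dotvC y x); ring.
have E1 : Ax * dotv w w = tau * (sy * dotv gy w - sx * dotv gx w) + tau * (sx + sy) * dotv w w / 2.
  have xw : dotv x w = 1 - dotv x y by rewrite /w dotvBr Sx.
  have yw : dotv y w = dotv x y - 1 by rewrite /w dotvBr Sy dotvC.
  rewrite dw.
  have := congr1 (fun z => dotv z w) hv.
  rewrite /= !dotvDl !dotvZl !dotvBl -eA xw yw => h.
  have : Ax * (2 - 2 * dotv x y) = Ax * (1 - dotv x y) - Ax * (dotv x y - 1) by ring.
  move=> ->; nra.
have dwe : dotv w w = enorm w ^+ 2 by rewrite enorm_sq.
have hG : `|sy ^+ 2 * dotv gy w - sx ^+ 2 * dotv gx w| <= (n%:R * C1) * dotv w w.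
  have -> : sy ^+ 2 * dotv gy w - sx ^+ 2 * dotv gx w = dotv (sy ^+ 2 *: gy - sx ^+ 2 *: gx) w.
    by rewrite dotvBl !dotvZl.
  apply: le_trans (@sum_coord_bound _ w (C1 * enorm w) _) _.
    by move=> i; rewrite !mxE -normrN opprB; apply: hL1.
  by rewrite dwe le_eqVlt; apply/orP; left; apply/eqP; ring.
have hGy : `|sy ^+ 2 * dotv gy w| <= (n%:R * (M1 + M2)) * enorm w.
  rewrite -dotvZl; apply: sum_coord_bound => i; rewrite mxE.
  have hi := coord_sq gy i.
  have : (sy ^+ 2 * gy ord0 i) ^+ 2 <= M1 * M2.
    have s20 : 0 <= sy ^+ 2 := sqr_ge0 _.
    have p1 : sy ^+ 2 * gy ord0 i ^+ 2 <= sy ^+ 2 * dotv gy gy by rewrite ler_wpM2l.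
    have p2 : sy ^+ 2 * (sy ^+ 2 * gy ord0 i ^+ 2) <= sy ^+ 2 * M2.
      by rewrite ler_wpM2l //; apply: le_trans p1 hM2.
    have p3 : sy ^+ 2 * M2 <= M1 * M2 by rewrite ler_wpM2r.
    rewrite exprMn; apply: le_trans p3; apply: le_trans p2.
    by rewrite mulrA -expr2 -exprM.
  move=> h; rewrite -ler_sqr ?nnegrE ?addr_ge0 // real_normK ?num_real //.
  apply: le_trans h _; nra.
have Fx0 : 0 <= sx ^+ 2 * dotv gx gx by rewrite mulr_ge0 ?sqr_ge0 ?dotv_ge0.
have Fy0 : 0 <= sy ^+ 2 * dotv gy gy by rewrite mulr_ge0 ?sqr_ge0 ?dotv_ge0.
have E2y' : 2 * sy * tau * Ax = 1 + tau ^+ 2 * (sy ^+ 2 + sy ^+ 2 * dotv gy gy) by rewrite eA.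
have d0 := inj_scalar sx0 sy0 t0 (enorm_ge0 w) dwe E1 E2x E2y' Fx0 Fy0 hL2 hG hGy
  hMx hMy htM ht1 (mulr_ge0 (ler0n _ _) c0) (mulr_ge0 (ler0n _ _) (addr_ge0 m10 m20)) f0 m10 hsm.
by apply/eqP; rewrite -subr_eq0; apply/eqP; apply: dotv_eq0.
Qed.
End L9.

Section L10.
Variable R : realType.
Variable m : nat.
Local Notation V := 'rV[R]_(m.+1).

Lemma derive_addc (f : V -> R) (t : R) a v :
  'D_v (fun z => f z + t) a = 'D_v f a.
Proof.
rewrite /derive.
suff -> : (fun h : R => h^-1 *: (((fun z => f z + t) \o shift a) (h *: v) - (f a + t))) =
  (fun h => h^-1 *: ((f \o shift a) (h *: v) - f a)) by [].
by apply: funext => h; congr (_ *: _); rewrite /comp; ring.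
Qed.

Lemma radial_addc (rho : V -> R) (t : R) :
  radial (fun x => rho x + t) = fun z => radial rho z + t.
Proof. by []. Qed.

Lemma D1_addc (rho : V -> R) t i : D1 (fun x => rho x + t) i = D1 rho i.
Proof. by apply: funext => a; rewrite /D1 radial_addc derive_addc. Qed.

Lemma D1f_addc (rho : V -> R) t j :
  'D_(@ebas R _ j) (radial (fun x => rho x + t)) = 'D_(@ebas R _ j) (radial rho).
Proof. by apply: funext => a; rewrite radial_addc derive_addc. Qed.

Lemma D2_addc (rho : V -> R) t i j : D2 (fun x => rho x + t) i j = D2 rho i j.
Proof. by rewrite /D2 D1f_addc. Qed.

Lemma sgrad_addc (Om : set V) (rho : V -> R) t :
  sgrad Om (fun x => rho x + t) = sgrad Om rho.
Proof.
have e : D1 (fun x => rho x + t) = D1 rho by apply: funext => i; exact: D1_addc.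
by rewrite /sgrad e.
Qed.

Lemma shess_addc (Om : set V) (rho : V -> R) t :
  shess Om (fun x => rho x + t) = shess Om rho.
Proof.
have e : D2 (fun x => rho x + t) = D2 rho.
  by apply: funext => i; apply: funext => j; exact: D2_addc.
by rewrite /shess e.
Qed.

Lemma schouten_addc (Om : set V) (rho : V -> R) t :
  schouten Om (fun x => rho x + t) = schouten Om rho.
Proof. by rewrite /schouten (sgrad_addc Om rho t) (shess_addc Om rho t). Qed.

Lemma C2_addc (Om D : set V) (rho : V -> R) t :
  C2_upto Om D rho -> C2_upto Om D (fun x => rho x + t).
Proof.
case=> c1 c2 c3 c4 c5; split.
- move=> x; apply: cvgD; [exact: c1 | exact: cvg_cst].
- move=> x Ox; rewrite radial_addc.
  by apply: differentiableD; [exact: c2 | exact: differentiable_cst].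
- by move=> j x Ox; rewrite D1f_addc; exact: c3.
- by move=> i j x Ox; rewrite D1_addc D2_addc; exact: c4.
- by move=> i j p Dp; rewrite D1_addc D2_addc; exact: c5.
Qed.

Lemma lim_le_within (Om : set V) p (f : V -> R) (a b : R) : closure Om p ->
  f @ within Om (nbhs p) --> a -> (forall q, Om q -> f q <= b) -> a <= b.
Proof.
move=> cp fa hb.
have PF : ProperFilter (within Om (nbhs p)) := @within_nbhs_proper _ Om p cp.
apply: (cvgr_to_le fa); apply: (filterS (P := Om)); first by move=> q Oq; exact: hb.
exact: withinT.
Qed.

Lemma cvg_to_within (Om : set V) p (f : V -> R) : f @ p --> f p ->
  f @ within Om (nbhs p) --> f p.
Proof. by move=> h; apply: cvg_trans h; apply: cvg_app; exact: cvg_within. Qed.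

Lemma pass2 (Om D : set V) (Phi Phis : V -> R) (K : R) :
  (forall p, D p -> closure Om p /\ Phi @ within Om (nbhs p) --> Phis p) ->
  (forall x y, Om x -> Om y -> `|Phi x - Phi y| <= K * enorm (x - y)) ->
  forall x y, D x -> D y -> `|Phis x - Phis y| <= K * enorm (x - y).
Proof.
move=> hD hL.
have step1 : forall x y, D x -> Om y -> `|Phis x - Phi y| <= K * enorm (x - y).
  move=> x y Dx Oy; have [cx hx] := hD x Dx.
  rewrite -subr_le0.
  apply: (lim_le_within cx (f := fun q => `|Phi q - Phi y| - K * enorm (q - y))).
    apply: cvgB; first by apply: cvg_norm; apply: cvgB => //; exact: cvg_cst.
    apply: cvgMl_tmp; apply: cvg_to_within; exact: cont_enorm_sub.
  by move=> q Oq; rewrite subr_le0; exact: hL.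
move=> x y Dx Dy; have [cy hy] := hD y Dy.
rewrite -subr_le0.
apply: (lim_le_within cy (f := fun q => `|Phis x - Phi q| - K * enorm (x - q))).
  apply: cvgB; first by apply: cvg_norm; apply: cvgB => //; exact: cvg_cst.
  apply: cvgMl_tmp.
  have e : (fun q => enorm (x - q)) = (fun q => enorm (q - x)).
    by apply: funext => q; rewrite enormBC.
  rewrite e (enormBC x y); apply: cvg_to_within; exact: cont_enorm_sub.
by move=> q Oq; rewrite subr_le0; exact: step1.
Qed.
End L10.

Section L11.
Variable R : realType.
Variable m : nat.
Local Notation V := 'rV[R]_(m.+1).

Lemma sphere_closed : closed (@sphere R m).
Proof.
have c : continuous (fun z : V => dotv z z).
  by move=> z; apply: (@cvg_dotv _ _ _ (nbhs z) _ id id z z); exact: cvg_id.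
exact: (preimage_closed (fun x _ => c x) (@closed_eq R (1:R))).
Qed.

Lemma bound_on_closure (Om : set V) (s : V -> R) :
  Om `<=` @sphere R m -> {within closure Om, continuous s} ->
  exists M, forall x, Om x -> s x <= M.
Proof.
move=> OS hs.
have clS : closure Om `<=` @sphere R m.
  rewrite [X in _ `<=` X](closure_id _).1; last exact: sphere_closed.
  exact: closureS.
have bd : bounded_set (closure Om).
  rewrite /bounded_near; apply: filterS (nbhs_pinfty_ge (r := 1) _) => // M M1 x clx.
  apply: le_trans M1; have -> : `|x| = mx_norm x by [].
  rewrite mx_normrE; apply: bigmax_le => // -[i j] _ /=.
  rewrite (ord1 i); apply: le_trans (coord_le _ _) _.
  by rewrite (enorm_sph (clS _ clx)).
have cpt : compact (closure Om) := bounded_closed_compact bd (@closed_closure _ _).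
have := compact_bounded (continuous_compact hs cpt).
rewrite /bounded_near => /pinfty_ex_gt0 [M M0 hM].
exists M => x Ox; apply: le_trans (ler_norm _) _.
by apply: hM; exists x => //; exact: subset_closure.
Qed.
End L11.

Section L12.
Variable R : realType.
Variable m : nat.
Local Notation V := 'rV[R]_(m.+1).
Local Notation n := m.+1.

Definition schF (a : 'I_n -> R) (H : 'I_n -> 'I_n -> R) (X : V) : R :=
  2^-1 * dotv X X - \sum_i \sum_j X ord0 i * H i j * X ord0 j
  + (\sum_i a i * X ord0 i) * (\sum_i a i * X ord0 i)
  - 2^-1 * (\sum_i a i * a i) * dotv X X.

Lemma schouten_schF (Om : set V) (rho : V -> R) p X :
  schouten Om rho p X X =
  schF (fun i => ext Om (D1 rho i) p) (fun i j => ext Om (D2 rho i j) p) X.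
Proof.
rewrite /schouten /schF /bilin /sgrad /shess /dotv.
have e1 : \sum_i (\row_i0 ext Om (D1 rho i0) p) ord0 i * X ord0 i =
          \sum_i ext Om (D1 rho i) p * X ord0 i.
  by apply: eq_bigr => i _; rewrite mxE.
have e2 : \sum_i (\row_i0 ext Om (D1 rho i0) p) ord0 i * (\row_i0 ext Om (D1 rho i0) p) ord0 i =
          \sum_i ext Om (D1 rho i) p * ext Om (D1 rho i) p.
  by apply: eq_bigr => i _; rewrite mxE.
have e3 : \sum_i \sum_j X ord0 i * (\matrix_(i0, j0) ext Om (D2 rho i0 j0) p) i j * X ord0 j =
          \sum_i \sum_j X ord0 i * ext Om (D2 rho i j) p * X ord0 j.
  by apply: eq_bigr => i _; apply: eq_bigr => j _; rewrite mxE.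
by rewrite e1 e2 e3.
Qed.

Lemma bilin_raw (H : 'I_n -> 'I_n -> R) X :
  bilin (\matrix_(i, j) H i j) X X = \sum_i \sum_j X ord0 i * H i j * X ord0 j.
Proof. by apply: eq_bigr => i _; apply: eq_bigr => j _; rewrite mxE. Qed.

Lemma cvg_schF (T : Type) (F : set_system T) (FF : Filter F)
  (a : T -> 'I_n -> R) (H : T -> 'I_n -> 'I_n -> R) a0 H0 X :
  (forall i, (fun q => a q i) @ F --> a0 i) ->
  (forall i j, (fun q => H q i j) @ F --> H0 i j) ->
  (fun q => schF (a q) (H q) X) @ F --> schF a0 H0 X.
Proof.
move=> ha hH; rewrite /schF.
have hs : (fun q => \sum_i a q i * X ord0 i) @ F --> \sum_i a0 i * X ord0 i.
  apply: cvg_sumI => i; apply: cvgMr_tmp; exact: ha.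
have h2 : (fun q => \sum_i a q i * a q i) @ F --> \sum_i a0 i * a0 i.
  by apply: cvg_sumI => i; apply: (@cvgM _ _ _ _ (fun q => a q i) (fun q => a q i)); exact: ha.
have h3 : (fun q => \sum_i \sum_j X ord0 i * H q i j * X ord0 j) @ F -->
          \sum_i \sum_j X ord0 i * H0 i j * X ord0 j.
  apply: cvg_sumI => i; apply: cvg_sumI => j.
  apply: (@cvgM _ _ _ _ (fun q => X ord0 i * H q i j) (cst (X ord0 j))); last exact: cvg_cst.
  apply: (@cvgM _ _ _ _ (cst (X ord0 i)) (fun q => H q i j)); first exact: cvg_cst.
  exact: hH.
have c1 : (fun _ : T => (2:R)^-1) @ F --> (2:R)^-1 by exact: cvg_cst.
have c2 : (fun _ : T => dotv X X) @ F --> dotv X X by exact: cvg_cst.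
have c3 : (fun _ : T => 2^-1 * dotv X X) @ F --> 2^-1 * dotv X X by exact: cvg_cst.
have h4 : (fun q => (\sum_i a q i * X ord0 i) * (\sum_i a q i * X ord0 i)) @ F -->
   (\sum_i a0 i * X ord0 i) * (\sum_i a0 i * X ord0 i) by apply: cvgM.
have h5 : (fun q => 2^-1 * (\sum_i a q i * a q i)) @ F --> 2^-1 * (\sum_i a0 i * a0 i).
  by apply: cvgM.
have h6 : (fun q => 2^-1 * (\sum_i a q i * a q i) * dotv X X) @ F -->
   2^-1 * (\sum_i a0 i * a0 i) * dotv X X by apply: cvgM.
have h7 : (fun q => 2^-1 * dotv X X - \sum_i \sum_j X ord0 i * H q i j * X ord0 j) @ F -->
   2^-1 * dotv X X - \sum_i \sum_j X ord0 i * H0 i j * X ord0 j by apply: cvgB.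
apply: cvgB; last exact: h6.
by apply: cvgD; [exact: h7 | exact: h4].
Qed.

Lemma phiE (Om : set V) (rho : V -> R) t p :
  phi Om (fun x => rho x + t) p =
  (expR (rho p + t) / 2 * (1 + expR (- (2 * (rho p + t))) *
     (1 + dotv (sgrad Om rho p) (sgrad Om rho p))),
   (expR (rho p + t) / 2 * (1 + expR (- (2 * (rho p + t))) *
     (1 + dotv (sgrad Om rho p) (sgrad Om rho p)))) *: p +
   (expR (- rho p) * expR (- t)) *: (sgrad Om rho p - p)).
Proof. rewrite /phi (sgrad_addc Om rho t) /=. by have -> : expR (- (rho p + t)) = expR (- rho p) * expR (- t) by rewrite opprD expRD. Qed.

Lemma phiA (r t G : R) :
  2 * expR (- r) * expR (- t) * (expR (r + t) / 2 * (1 + expR (- (2 * (r + t))) * (1 + G)))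
  = 1 + expR (- t) ^+ 2 * (expR (- r) ^+ 2 + expR (- r) ^+ 2 * G).
Proof.
have h1 : expR (- r) * expR (- t) * expR (r + t) = 1.
  by rewrite -!expRD (_ : - r + - t + (r + t) = 0) ?expR0 //; ring.
have h2 : expR (- (2 * (r + t))) = (expR (- r) * expR (- t)) ^+ 2.
  by rewrite -expRD -expRM_natl; congr expR; ring.
rewrite h2.
have : 2 * expR (- r) * expR (- t) * (expR (r + t) / 2 * (1 + (expR (- r) * expR (- t)) ^+ 2 * (1 + G)))
   = (expR (- r) * expR (- t) * expR (r + t)) * (1 + (expR (- r) * expR (- t)) ^+ 2 * (1 + G)).
  by field.
move=> ->; rewrite h1 mul1r; ring.
Qed.

Lemma eig_small (lam K3 t : R) : 0 <= K3 -> K3 + 1 <= t ->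
  lam * expR (2 * t) <= K3 -> lam < 2^-1.
Proof.
move=> k0 kt h; have e := expR_ge1Dx (2 * t).
rewrite ltNge; apply/negP => hl.
have : 2^-1 * expR (2 * t) <= lam * expR (2 * t) by rewrite ler_wpM2r ?expR_ge0.
lra.
Qed.

Lemma tau_small (t K : R) : 0 <= K -> K <= 2 * t -> expR (- t) ^+ 2 * K < 1.
Proof.
move=> k0 kt; have e := expR_ge1Dx (2 * t).
have h : expR (- t) ^+ 2 * expR (2 * t) = 1.
  by rewrite -expRM_natl -expRD (_ : 2%:R * - t + 2 * t = 0) ?expR0 //; ring.
have p : 0 < expR (- t) ^+ 2 by rewrite exprn_gt0 ?expR_gt0.
have : expR (- t) ^+ 2 * K < expR (- t) ^+ 2 * expR (2 * t) by rewrite ltr_pM2l //; lra.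
by rewrite h.
Qed.
End L12.

Unset Implicit Arguments.

Theorem mainTheorem5 (R : realType) (m : nat) (hm : (3 <= m)%N)
  (Om V1 V2 : set 'rV[R]_(m.+1)) (k1 k2 : nat) (alpha : R)
  (rho : 'rV[R]_(m.+1) -> R) :
  Om `<=` @sphere R m ->
  (exists U, open U /\ Om = U `&` @sphere R m) ->
  connected Om ->
  closure Om `\` Om = V1 `|` V2 ->
  V1 `&` V2 = set0 ->
  V1 `<=` @sphere R m -> V2 `<=` @sphere R m ->
  compact V1 -> compact V2 ->
  submanifold k1 V1 -> submanifold k2 V2 ->
  0 < alpha < 1 ->
  C2alpha Om (Om `|` V1) alpha rho ->
  (exists s : 'rV[R]_(m.+1) -> R,
      (forall x, Om x -> s x = expR (- rho x) ^+ 2) /\ C11_closure Om s) ->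
  (exists F : 'rV[R]_(m.+1) -> R,
      (forall x, Om x ->
          F x = dotv (grad_in (fun y => expR (- rho y)) x)
                     (grad_in (fun y => expR (- rho y)) x)) /\
      exists C : R, forall x y, closure Om x -> closure Om y ->
          `|F x - F y| <= C * enorm (x - y)) ->
  exists t0 : R, 0 < t0 /\
    forall t : R, t0 < t ->
      horo_concave Om (Om `|` V1) (fun x => rho x + t) /\
      injective_on (Om `|` V1) (phi Om (fun x => rho x + t)).
Proof.
move=> HS [U [oU eOm]] _ Hbd _ HV1S _ _ _ _ _ _ [HC2 _]
  [s [hs [s1 s2 s3 s4 [Cs hLs]]]] [F [hF [CF hLF]]].
set D := Om `|` V1.
have DS : forall p, D p -> dotv p p = 1.
  by move=> p [Op|Vp]; [exact: HS | exact: HV1S].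
have Dcl : forall p, D p -> closure Om p.
  move=> p [Op|Vp]; first exact: subset_closure.
  have : (V1 `|` V2) p by left.
  by rewrite -Hbd => -[].
have C2t : forall t, C2_upto Om D (fun x => rho x + t) by move=> t; exact: C2_addc.
case: (HC2) => c1 c2 c3 c4 c5.
have [[q0 Oq0]|noOm] := pselect (exists q, Om q); last first.
  have D0 : forall p, ~ D p.
    move=> p Dp; have [q [Oq _]] := Dcl p Dp setT (@filterT _ (nbhs p) _).
    by apply: noOm; exists q.
  exists 1; split; first exact: ltr01.
  move=> t _; split.
    split; first exact: C2t.
    by move=> p Dp; case: (D0 p Dp).
  by move=> x y Dx; case: (D0 x Dx).
have [M0 hM0] := bound_on_closure HS s3.
set M1 := `|M0|.
have M10 : 0 <= M1 := normr_ge0 _.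
have sig2 : forall q, Om q -> expR (- rho q) ^+ 2 <= M1.
  by move=> q Oq; rewrite -hs //; apply: le_trans (hM0 q Oq) (ler_norm _).
set C1 := `|Cs|.
set CF1 := `|CF|.
have C10 : 0 <= C1 := normr_ge0 _.
have CF10 : 0 <= CF1 := normr_ge0 _.
have r_sph : forall q, Om q -> radial rho q = rho q.
  by move=> q Oq; apply: radial_sph; apply: DS; left.
have RD1s : forall i q, Om q -> D1 s i q = -2 * expR (- rho q) ^+ 2 * D1 rho i q.
  move=> i q Oq; rewrite {1}/D1 (D1s_eq oU eOm c2 hs (@ebas R _ i) Oq) r_sph //.
  by rewrite expN2.
have RF : forall q, Om q ->
    F q = expR (- rho q) ^+ 2 * \sum_i D1 rho i q * D1 rho i q.
  move=> q Oq; rewrite hF // /grad_in /dotv mulr_sumr; apply: eq_bigr => i _.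
  rewrite !mxE /D1 (D1sig_eq c2 (@ebas R _ i) Oq) r_sph // mulN1r.
  rewrite !mulN1r; ring.
have edist : forall x y, Om x -> Om y -> enorm (x - y) <= 2.
  by move=> x y Ox Oy; apply: sphere_dist; apply: DS; left.
have hL' : forall i x y, Om x -> Om y -> `|D1 s i x - D1 s i y| <= C1 * enorm (x - y).
  move=> i x y Ox Oy; apply: le_trans (hLs i x y Ox Oy) _.
  by apply: ler_wpM2r; [exact: enorm_ge0 | exact: ler_norm].
set B1 := \sum_i `|D1 s i q0| + C1 * 2.
have B10 : 0 <= B1.
  by apply: addr_ge0; [apply: sumr_ge0 => i _; exact: normr_ge0 | apply: mulr_ge0].
have hB : forall i q, Om q -> `|D1 s i q| <= B1.
  move=> i q Oq.
  have h1 : `|D1 s i q0| <= \sum_j `|D1 s j q0|.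
    rewrite (bigD1 i) //= lerDl; apply: sumr_ge0 => j _; exact: normr_ge0.
  have h2 : `|D1 s i q - D1 s i q0| <= C1 * 2.
    apply: le_trans (hL' i q q0 Oq Oq0) _; apply: ler_wpM2l => //; exact: edist.
  have h3 : `|D1 s i q| <= `|D1 s i q0| + `|D1 s i q - D1 s i q0|.
    by have := ler_normD (D1 s i q0) (D1 s i q - D1 s i q0); rewrite addrC subrK addrC.
  rewrite /B1; lra.
set K0 := (4 * C1 + B1) * (m.+1)%:R.
have hess : forall q X, Om q ->
    - (expR (- rho q) ^+ 2) * bilin (\matrix_(i, j) D2 rho i j q) X X <= K0 * dotv X X.
  move=> q X Oq; have := hess_bound oU eOm c2 c3 hs C10 B10 hL' hB X Oq.
  by rewrite r_sph // -expN2.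
set M2 := `|F q0| + CF1 * 2.
have M20 : 0 <= M2 by apply: addr_ge0 => //; apply: mulr_ge0.
have FB : forall q, Om q -> expR (- rho q) ^+ 2 * \sum_i D1 rho i q * D1 rho i q <= M2.
  move=> q Oq; rewrite -RF //.
  have h1 : `|F q - F q0| <= CF1 * 2.
    apply: le_trans (hLF q q0 (subset_closure Oq) (subset_closure Oq0)) _.
    apply: le_trans (_ : CF * enorm (q - q0) <= CF1 * enorm (q - q0)) _.
      by apply: ler_wpM2r; [exact: enorm_ge0 | exact: ler_norm].
    by apply: ler_wpM2l => //; exact: edist.
  have := ler_norm (F q0); have := ler_norm (F q - F q0); rewrite /M2; lra.
set K3 := M1 / 2 + K0 + M2.
have SchRaw : forall q X, Om q ->
    expR (- rho q) ^+ 2 * schF (fun i => D1 rho i q) (fun i j => D2 rho i j q) X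
      <= K3 * dotv X X.
  move=> q X Oq.
  have hh := hess q X Oq; rewrite bilin_raw in hh.
  have X0 := dotv_ge0 X.
  have s0 : 0 <= expR (- rho q) ^+ 2 := sqr_ge0 _.
  set a := \sum_i D1 rho i q * D1 rho i q.
  set b := \sum_i D1 rho i q * X ord0 i.
  have cs : b * b <= a * dotv X X.
    have e1 : b = dotv (\row_i D1 rho i q) X by apply: eq_bigr => i _; rewrite mxE.
    have e2 : a = dotv (\row_i D1 rho i q) (\row_i D1 rho i q).
      by apply: eq_bigr => i _; rewrite !mxE.
    by rewrite e1 e2 -expr2; exact: CS.
  have a0 : 0 <= a by apply: sumr_ge0 => i _; rewrite -expr2 sqr_ge0.
  have fb := FB q Oq; have sg := sig2 q Oq.
  rewrite /schF -/a -/b.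
  set H := \sum_i \sum_j _ in hh *.
  have p1 : expR (- rho q) ^+ 2 * (b * b) <= expR (- rho q) ^+ 2 * a * dotv X X.
    by rewrite -mulrA ler_wpM2l.
  have p2 : expR (- rho q) ^+ 2 * a * dotv X X <= M2 * dotv X X by rewrite ler_wpM2r.
  have p3 : expR (- rho q) ^+ 2 * dotv X X <= M1 * dotv X X by rewrite ler_wpM2r.
  have p4 : 0 <= expR (- rho q) ^+ 2 * a * dotv X X by rewrite !mulr_ge0.
  rewrite /K3; nra.
have Lrho : forall p, D p -> rho @ within Om (nbhs p) --> rho p.
  move=> p Dp; have h := (@subspace_continuousP _ D _ rho).1 c1 p Dp.
  apply: cvg_trans h; apply: cvg_app; apply: within_subset => //.
  by move=> q Oq; left.
have Lsig2 : forall p, D p ->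
    (fun q => expR (- rho q) ^+ 2) @ within Om (nbhs p) --> expR (- rho p) ^+ 2.
  move=> p Dp.
  have PF := @within_nbhs_proper _ Om p (Dcl p Dp).
  have h : (fun q => expR (- rho q)) @ within Om (nbhs p) --> expR (- rho p).
    apply: (@continuous_cvg _ _ _ _ _ (fun q => - rho q) (@expR R)).
      exact: continuous_expR.
    by apply: cvgN; exact: Lrho.
  have e : (fun q => expR (- rho q) ^+ 2) = (fun q => expR (- rho q) * expR (- rho q)).
    by apply: funext => q; rewrite expr2.
  by rewrite e expr2; apply: cvgM.
have Lg : forall i p, D p ->
    D1 rho i @ within Om (nbhs p) --> (sgrad Om rho p) ord0 i.
  by move=> i p Dp; rewrite mxE; exact: (c5 i i p Dp).1.
have LH : forall i j p, D p ->
    D2 rho i j @ within Om (nbhs p) --> ext Om (D2 rho i j) p.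
  by move=> i j p Dp; exact: (c5 i j p Dp).2.
have E1 : forall i x y, D x -> D y ->
    `|expR (- rho x) ^+ 2 * (sgrad Om rho x) ord0 i -
      expR (- rho y) ^+ 2 * (sgrad Om rho y) ord0 i| <= C1 * enorm (x - y).
  move=> i; apply: (pass2 (Phi := fun q => expR (- rho q) ^+ 2 * D1 rho i q)).
    move=> p Dp; split; first exact: Dcl.
    by apply: cvgM; [exact: Lsig2 | exact: Lg].
  move=> x y Ox Oy.
  have ex : expR (- rho x) ^+ 2 * D1 rho i x = - 2^-1 * D1 s i x.
    by rewrite RD1s //; field.
  have ey : expR (- rho y) ^+ 2 * D1 rho i y = - 2^-1 * D1 s i y.
    by rewrite RD1s //; field.
  rewrite ex ey -mulrBr normrM normrN.
  have := hL' i x y Ox Oy; have := enorm_ge0 (x - y).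
  rewrite (_ : `|2^-1| = 2^-1 :> R); last by rewrite ger0_norm.
  nra.
have E2 : forall x y, D x -> D y ->
    `|expR (- rho x) ^+ 2 * dotv (sgrad Om rho x) (sgrad Om rho x) -
      expR (- rho y) ^+ 2 * dotv (sgrad Om rho y) (sgrad Om rho y)| <= CF1 * enorm (x - y).
  apply: (pass2 (Phi := fun q => expR (- rho q) ^+ 2 * \sum_i D1 rho i q * D1 rho i q)).
    move=> p Dp; split; first exact: Dcl.
    apply: cvgM; first exact: Lsig2.
    apply: cvg_sumI => i; apply: cvgM; exact: Lg.
  move=> x y Ox Oy; rewrite -!RF //.
  apply: le_trans (hLF x y (subset_closure Ox) (subset_closure Oy)) _.
  by apply: ler_wpM2r; [exact: enorm_ge0 | exact: ler_norm].
have E3 : forall p, D p -> expR (- rho p) ^+ 2 <= M1.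
  by move=> p Dp; apply: (lim_le_within (Dcl p Dp) (Lsig2 p Dp)).
have E4 : forall p, D p ->
    expR (- rho p) ^+ 2 * dotv (sgrad Om rho p) (sgrad Om rho p) <= M2.
  move=> p Dp; apply: (lim_le_within (Dcl p Dp) _ FB).
  apply: cvgM; first exact: Lsig2.
  apply: cvg_sumI => i; apply: cvgM; exact: Lg.
have E5 : forall p X, D p -> expR (- rho p) ^+ 2 * schouten Om rho p X X <= K3 * dotv X X.
  move=> p X Dp; rewrite schouten_schF.
  apply: (lim_le_within (Dcl p Dp) _ (fun q Oq => SchRaw q X Oq)).
  apply: cvgM; first exact: Lsig2.
  apply: cvg_schF => [i|i j]; first exact: (c5 i i p Dp).1.
  exact: LH.
have K00 : 0 <= K0 by apply: mulr_ge0 => //; apply: addr_ge0 => //; apply: mulr_ge0.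
have K30 : 0 <= K3 by rewrite /K3; apply: addr_ge0; [apply: addr_ge0 => //; apply: divr_ge0|].
set K5 := 2 * ((m.+1)%:R * C1) + 4 * CF1 * ((m.+1)%:R * (M1 + M2)) + 2 * M1.
have K50 : 0 <= K5.
  rewrite /K5; apply: addr_ge0; last by apply: mulr_ge0.
  apply: addr_ge0; first by apply: mulr_ge0 => //; apply: mulr_ge0.
  by apply: mulr_ge0; [apply: mulr_ge0|apply: mulr_ge0 => //; apply: addr_ge0].
exists (1 + K3 + K5 + 2 * M1); split; first by lra.
move=> t tt0; split.
  split; first exact: C2t.
  move=> p Dp lam [X [tX Xn0 hX]].
  have h := hX X tX; rewrite (schouten_addc Om rho t) in h.
  have hb := E5 p X Dp; rewrite h in hb.
  have Xp : 0 < dotv X X.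
    rewrite lt_def dotv_ge0 andbT; apply/eqP => X0.
    by move: Xn0; rewrite (dotv_eq0 X0) eqxx.
  have e : expR (- rho p) ^+ 2 * expR (2 * (rho p + t)) = expR (2 * t).
    by rewrite -expRM_natl -expRD; congr expR; ring.
  have : lam * expR (2 * t) * dotv X X <= K3 * dotv X X.
    apply: le_trans hb; rewrite le_eqVlt; apply/orP; left; apply/eqP.
    by rewrite -e; ring.
  rewrite ler_pM2r // => hl.
  by apply: (eig_small K30 _ hl); lra.
move=> x y Dx Dy hphi.
rewrite !phiE in hphi; case: hphi => eA ev.
have htM : expR (- t) ^+ 2 * M1 <= 2^-1.
  have := tau_small (K := 2 * M1) (t := t) (mulr_ge0 (ler0n _ _) M10) ltac:(lra).
  lra.
have ht1 : expR (- t) ^+ 2 <= 1.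
  have := tau_small (K := 1) (t := t) ler01 ltac:(lra); lra.
have hsm := tau_small (t := t) K50 ltac:(lra).
exact: (inj_vec (DS x Dx) (DS y Dy) (expR_gt0 _) (expR_gt0 _) (expR_gt0 (- t)) eA ev
  (phiA _ _ _) (phiA _ _ _) (fun i => E1 i x y Dx Dy) (E2 x y Dx Dy) (E3 x Dx) (E3 y Dy)
  (E4 y Dy) C10 CF10 M10 M20 htM ht1 hsm).
Qed.
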